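(* Let $G=(U,V,E)$ be a finite bipartite graph, $F\subseteq E$, and let $(E_r,E_b)$ be an $(A,B,C)$-free bipartition of the set $E_c$ of committed edges of $G$. Let $E_u=E\setminus E_c$ be the set of uncommitted edges. Then the subgraph $(U,V,E_b\cup E_u)$ of $G$ is a chain graph.
   Context: A chain graph is a bipartite graph with no induced $2K_2$. $\hat{E}=\{uv: u\in U,\ v\in V,\ uv\notin E\}$. Two edges $u_1v_1,u_2v_2\in E$ ($u_i\in U$, $v_i\in V$) are in conflict in $G$ if $u_1v_2\notin E$ and $u_2v_1\notin E$. An edge is committed if it is in conflict with some other edge of $E$, and uncommitted otherwise. A bipartition of $E_c$ is a pair $(E_r,E_b)$ with $E_r\cap E_b=\emptyset$, $E_r\cup E_b=E_c$, $F\cap E_c\subseteq E_b$. It is $(A,B,C)$-free if there are no $u_1,u_2\in U$, $v_1,v_2\in V$ forming: $(A_1)$: $u_1v_1,u_2v_2\in E_r$, $u_1v_2,u_2v_1\in\hat{E}$; $(A_2)$: $u_1v_1,u_2v_2\in E_b$, $u_1v_2,u_2v_1\in\hat{E}$; $(B_1)$: $u_1v_1,u_2v_2\in E_r$, $u_1v_2\in\hat{E}$, $u_2v_1\in E_b$; $(B_2)$: $u_1v_1,u_2v_2\in E_b$, $u_1v_2\in\hat{E}$, $u_2v_1\in E_r$; $(C)$: $u_1v_1,u_2v_2\in E_r$, $u_1v_2\in\hat{E}$, $u_2v_1\in F$. *)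

(* Defs.v *)
(* A finite bipartite graph G = (U,V,E) is given by two
   finite types U, V (the sides) and an edge relation E : U -> V -> bool. *)
From mathcomp Require Import all_boot.
Set Implicit Arguments. Unset Strict Implicit. Unset Printing Implicit Defensive.

Definition brel (U V : finType) := U -> V -> bool.

Section Defs.
Variables (U V : finType).

Definition nonedge (E : brel U V) : brel U V := fun u v => ~~ E u v.

Definition in_conflict (E : brel U V) (u1 : U) (v1 : V) (u2 : U) (v2 : V) :=
  [&& E u1 v1, E u2 v2, ~~ E u1 v2 & ~~ E u2 v1].

Definition committed (E : brel U V) : brel U V := fun u v =>
  E u v && [exists u2 : U, exists v2 : V,
     ((u2, v2) != (u, v)) && in_conflict E u v u2 v2].

Definition uncommitted (E : brel U V) : brel U V := fun u v =>
  E u v && ~~ committed E u v.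

Definition bipartition (E F Er Eb : brel U V) : Prop :=
  (forall u v, ~~ (Er u v && Eb u v)) /\
  (forall u v, (Er u v || Eb u v) = committed E u v) /\
  (forall u v, F u v -> committed E u v -> Eb u v).

Definition ABC_free (E F Er Eb : brel U V) : Prop :=
  forall (u1 u2 : U) (v1 v2 : V),
    ~ [&& Er u1 v1, Er u2 v2, nonedge E u1 v2 & nonedge E u2 v1]   (* A1 *)
 /\ ~ [&& Eb u1 v1, Eb u2 v2, nonedge E u1 v2 & nonedge E u2 v1]   (* A2 *)
 /\ ~ [&& Er u1 v1, Er u2 v2, nonedge E u1 v2 & Eb u2 v1]          (* B1 *)
 /\ ~ [&& Eb u1 v1, Eb u2 v2, nonedge E u1 v2 & Er u2 v1]          (* B2 *)
 /\ ~ [&& Er u1 v1, Er u2 v2, nonedge E u1 v2 & F u2 v1].          (* C *)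

(* A bipartite graph (U,V,H) is a chain graph iff it has no induced 2K2.
   Since all edges go between U and V, an induced 2K2 is exactly
   u1v1, u2v2 edges with u1v2, u2v1 non-edges. *)
Definition chain_graph (H : brel U V) : Prop :=
  forall (u1 u2 : U) (v1 v2 : V),
    ~ [&& H u1 v1, H u2 v2, ~~ H u1 v2 & ~~ H u2 v1].

End Defs.

(* Main.v *)
Require Import Defs.
From mathcomp Require Import all_boot.
Set Implicit Arguments. Unset Strict Implicit.

Section Aux.
Variables (U V : finType) (E F Er Eb : brel U V).

Lemma conf_com a b c d : E a b -> E c d -> ~~ E a d -> ~~ E c b -> committed E a b.
Proof.
move=> ab cd ad cb; rewrite /committed ab /=.
apply/existsP; exists c; apply/existsP; exists d; apply/andP; split.
  apply/eqP; case=> ec ed; subst c d; by rewrite ab in cb.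
by rewrite /in_conflict ab cd ad cb.
Qed.

Lemma com_partner a b : committed E a b ->
  exists c d, [/\ E c d, ~~ E a d & ~~ E c b].
Proof.
case/andP=> _ /existsP [c /existsP [d /andP [_ /and4P [_ h1 h2 h3]]]].
by exists c, d.
Qed.

Lemma com_E a b : committed E a b -> E a b.
Proof. by case/andP. Qed.

End Aux.

Theorem lemma4 (U V : finType) (E F Er Eb : brel U V) :
  (forall u v, F u v -> E u v) ->
  bipartition E F Er Eb ->
  ABC_free E F Er Eb ->
  chain_graph (fun u v => Eb u v || uncommitted E u v).
Proof.
move=> _ [Hdis [Hcov _]] Habc u1 u2 v1 v2 /and4P [hx hy hp hq].
have EbC : forall a b, Eb a b -> committed E a b.
  by move=> a b h; rewrite -Hcov h orbT.
have ErC : forall a b, Er a b -> committed E a b.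
  by move=> a b h; rewrite -Hcov h.
have HE : forall a b, Eb a b || uncommitted E a b -> E a b.
  move=> a b /orP [/EbC /com_E //|/andP [] //].
have toEb : forall a b, Eb a b || uncommitted E a b -> committed E a b -> Eb a b.
  move=> a b /orP [//|/andP [_ h]] c; by rewrite c in h.
have notH : forall a b, ~~ (Eb a b || uncommitted E a b) -> E a b -> Er a b.
  move=> a b; rewrite negb_or /uncommitted => /andP [nb nu] e.
  rewrite e /= negbK in nu; move: (Hcov a b); rewrite nu => /orP [//|h].
  by rewrite h in nb.
have comcase : forall a b, committed E a b -> Er a b \/ Eb a b.
  by move=> a b; rewrite -Hcov => /orP [] h; [left|right].
have EbnEr : forall a b, Eb a b -> ~~ Er a b.
  move=> a b h; move: (Hdis a b); by rewrite h andbT.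
have xE := HE _ _ hx; have yE := HE _ _ hy.
(* A1 forces partner to be blue *)
have partnerB : forall a b c d, Er a b -> E c d -> ~~ E a d -> ~~ E c b -> Eb c d.
  move=> a b c d ab cd ad cb.
  have cc : committed E c d by exact: (conf_com cd (com_E (ErC _ _ ab)) cb ad).
  case: (comcase _ _ cc) => // cdr.
  case: (Habc a c b d) => A1 _; exfalso; apply: A1.
  by rewrite /nonedge ab cdr ad cb.
case pE: (E u1 v2); case qE: (E u2 v1).
- have pr := notH _ _ hp pE; have qr := notH _ _ hq qE.
  have [u3 [v3 [w n13 n32]]] := com_partner (ErC _ _ pr).
  have wb := partnerB _ _ _ _ pr w n13 n32.
  have [u4 [v4 [z n24 n41]]] := com_partner (ErC _ _ qr).
  have zb := partnerB _ _ _ _ qr z n24 n41.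
  have e31 : E u3 v1.
    apply/negPn/negP => n31.
    have xb := toEb _ _ hx (conf_com xE w n13 n31).
    case: (Habc u1 u3 v1 v3) => _ [A2 _]; apply: A2.
    by rewrite /nonedge xb wb n13 n31.
  have e42 : E u4 v2.
    apply/negPn/negP => n42.
    have yb := toEb _ _ hy (conf_com yE z n24 n42).
    case: (Habc u2 u4 v2 v4) => _ [A2 _]; apply: A2.
    by rewrite /nonedge yb zb n24 n42.
  have e23 : E u2 v3.
    apply/negPn/negP => n23.
    have yb := toEb _ _ hy (conf_com yE w n23 n32).
    case: (Habc u2 u3 v2 v3) => _ [A2 _]; apply: A2.
    by rewrite /nonedge yb wb n23 n32.
  have e14 : E u1 v4.
    apply/negPn/negP => n14.
    have xb := toEb _ _ hx (conf_com xE z n14 n41).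
    case: (Habc u1 u4 v1 v4) => _ [A2 _]; apply: A2.
    by rewrite /nonedge xb zb n14 n41.
  have c23 := conf_com e23 e14 n24 n13.
  have c14 := conf_com e14 e23 n13 n24.
  case: (comcase _ _ c23) => h23.
  + have b14 : Eb u1 v4.
      case: (comcase _ _ c14) => // r14.
      case: (Habc u2 u1 v3 v4) => A1 _; exfalso; apply: A1.
      by rewrite /nonedge h23 r14 n24 n13.
    have e34 : E u3 v4.
      apply/negPn/negP => n34.
      case: (Habc u1 u3 v4 v3) => _ [A2 _]; apply: A2.
      by rewrite /nonedge b14 wb n13 n34.
    have yb := toEb _ _ hy (conf_com yE e34 n24 n32).
    case: (Habc u1 u2 v2 v3) => _ [_ [B1 _]]; apply: B1.
    by rewrite /nonedge pr h23 n13 yb.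
  + have r14 : Er u1 v4.
      case: (comcase _ _ c14) => // b14.
      case: (Habc u2 u1 v3 v4) => _ [A2 _]; exfalso; apply: A2.
      by rewrite /nonedge h23 b14 n24 n13.
    have e43 : E u4 v3.
      apply/negPn/negP => n43.
      case: (Habc u2 u4 v3 v4) => _ [A2 _]; apply: A2.
      by rewrite /nonedge h23 zb n24 n43.
    have xb := toEb _ _ hx (conf_com xE e43 n13 n41).
    case: (Habc u2 u1 v1 v4) => _ [_ [B1 _]]; apply: B1.
    by rewrite /nonedge qr r14 n24 xb.
- have pr := notH _ _ hp pE; have nq : ~~ E u2 v1 by rewrite qE.
  have [u3 [v3 [w n13 n32]]] := com_partner (ErC _ _ pr).
  have wb := partnerB _ _ _ _ pr w n13 n32.
  have e31 : E u3 v1.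
    apply/negPn/negP => n31.
    have xb := toEb _ _ hx (conf_com xE w n13 n31).
    case: (Habc u1 u3 v1 v3) => _ [A2 _]; apply: A2.
    by rewrite /nonedge xb wb n13 n31.
  have yb := toEb _ _ hy (conf_com yE e31 nq n32).
  have e23 : E u2 v3.
    apply/negPn/negP => n23.
    case: (Habc u2 u3 v2 v3) => _ [A2 _]; apply: A2.
    by rewrite /nonedge yb wb n23 n32.
  have xb := toEb _ _ hx (conf_com xE e23 n13 nq).
  case: (Habc u2 u1 v2 v1) => _ [_ [_ [B2 _]]]; apply: B2.
  by rewrite /nonedge yb xb nq pr.
- have qr := notH _ _ hq qE; have np : ~~ E u1 v2 by rewrite pE.
  have [u4 [v4 [z n24 n41]]] := com_partner (ErC _ _ qr).
  have zb := partnerB _ _ _ _ qr z n24 n41.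
  have e42 : E u4 v2.
    apply/negPn/negP => n42.
    have yb := toEb _ _ hy (conf_com yE z n24 n42).
    case: (Habc u2 u4 v2 v4) => _ [A2 _]; apply: A2.
    by rewrite /nonedge yb zb n24 n42.
  have xb := toEb _ _ hx (conf_com xE e42 np n41).
  have e14 : E u1 v4.
    apply/negPn/negP => n14.
    case: (Habc u1 u4 v1 v4) => _ [A2 _]; apply: A2.
    by rewrite /nonedge xb zb n14 n41.
  have yb := toEb _ _ hy (conf_com yE e14 n24 np).
  case: (Habc u1 u2 v1 v2) => _ [_ [_ [B2 _]]]; apply: B2.
  by rewrite /nonedge xb yb np qr.
- have np : ~~ E u1 v2 by rewrite pE.
  have nq : ~~ E u2 v1 by rewrite qE.
  have xb := toEb _ _ hx (conf_com xE yE np nq).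
  have yb := toEb _ _ hy (conf_com yE xE nq np).
  case: (Habc u1 u2 v1 v2) => _ [A2 _]; apply: A2.
  by rewrite /nonedge xb yb np nq.
Qed.
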